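(* Let $E$ be an integral regular elliptic curve over $\mathbb{F}_q$, let $\mathbf{n}_{m-1}$ be a tuple of positive integers, $Q=q_{\mathbf{n}_{m-1}}$, and let $a$ and $\beta^*_n$ ($n\ge0$) be as in the context (assuming $\alpha_0\neq0$), with additionally $\beta^*_{-1}:=0$. Then for every $n\ge1$, $$(Q^n-1)\,\beta^*_n=(Q^n+Q^{n-1}-a)\,\beta^*_{n-1}-(Q^{n-1}-Q)\,\beta^*_{n-2},$$ and together with $\beta^*_0=1$, $\beta^*_{-1}=0$ this recursion determines all $\beta^*_n$.
   Context: Let $\zeta_E(s)=\sum_{D\ge 0}N(D)^{-s}$ be the Artin zeta function of $E$ and $\widehat\zeta_E(s)=\zeta_E(s)$ its complete Artin zeta function (genus $1$). Derived zeta functions are defined recursively (here $g=1$). For the empty tuple $\mathbf{n}_{-1}=()$ put $q_{\mathbf{n}_{-1}}=q$, $T_{\mathbf{n}_{-1}}=q^{-s}$, $\widehat\zeta^{(\mathbf{n}_{-1})}_E=\widehat\zeta_E$. For a tuple $\mathbf{n}_m=(n_0,\dots,n_m)$ of positive integers put $\mathbf{n}_{m-1}=(n_0,\dots,n_{m-1})$, $q_{\mathbf{n}_m}=q^{n_0\cdots n_m}$, $T_{\mathbf{n}_m}=q^{-n_0\cdots n_ms}$; with $\widehat Z^{(\mathbf{n}_{m-1})}_E(T_{\mathbf{n}_{m-1}}):=\widehat\zeta^{(\mathbf{n}_{m-1})}_E(s)$, $\widehat\zeta^{(\mathbf{n}_{m-1})}_E(1):=\operatorname{Res}_{T_{\mathbf{n}_{m-1}}=1}\widehat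 Z^{(\mathbf{n}_{m-1})}_E$, $\widehat v_N=\prod_{k=1}^N\widehat\zeta^{(\mathbf{n}_{m-1})}_E(k)$, $$\widehat\zeta^{(\mathbf{n}_m)}_E(s)=\sum_{a=1}^{n_m}\Biggl(\sum_{\substack{k_1,\dots,k_p>0\\ \sum k_i=n_m-a}}\frac{\widehat v_{k_1}\cdots\widehat v_{k_p}}{\prod_{j=1}^{p-1}(1-q_{\mathbf{n}_{m-1}}^{k_j+k_{j+1}})}\frac{1}{1-q_{\mathbf{n}_{m-1}}^{n_ms-n_m+a+k_p}}\Biggr)\widehat\zeta^{(\mathbf{n}_{m-1})}_E(n_ms-n_m+a)\Biggl(\sum_{\substack{l_1,\dots,l_r>0\\ \sum l_i=a-1}}\frac{1}{1-q_{\mathbf{n}_{m-1}}^{-n_ms+n_m-a+1+l_1}}\frac{\widehat v_{l_1}\cdots\widehat v_{l_r}}{\prod_{j=1}^{r-1}(1-q_{\mathbf{n}_{m-1}}^{l_j+l_{j+1}})}\Biggr),$$ inner sums over ordered tuples of positive integers, an empty-composition sum being $1$. For the tuple $\mathbf{n}_{m-1}$, with $Q=q_{\mathbf{n}_{m-1}}$ and $T=Q^{-s}$, one can write $\widehat\zeta^{(\mathbf{n}_{m-1})}_E(s)=\alpha_0\cdot\frac{1-aT+QT^2}{(1-T)(1-QT)}$ with numbers $\alpha_0=\alpha^{(\mathbf{n}_{m-1})}_E(0)$ and $a$. Normalization: $\zeta^*(s):=\frac{1-aT+QT^2}{(1-T)(1-QT)}$, $\zeta^*(1):=\operatorname{Res}_{T=1}\zeta^*=\frac{Q+1-a}{Q-1}$,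 $v^*_k:=\prod_{j=1}^k\zeta^*(j)$, $\beta^*_0:=1$ and for $n\ge1$ $$\beta^*_n:=\sum_{\substack{k_1,\dots,k_p>0\\k_1+\cdots+k_p=n}}\frac{v^*_{k_1}\cdots v^*_{k_p}}{\prod_{j=1}^{p-1}(1-Q^{k_j+k_{j+1}})},$$ the $(\mathbf{n}_{m-1},n)$-derived beta invariant of $E$ computed from the normalized function $\zeta^*$. *)

(* Defs.v *)
From mathcomp Require Import all_boot all_order all_algebra.
Set Implicit Arguments. Unset Strict Implicit. Unset Printing Implicit Defensive.
Import Order.TTheory GRing.Theory Num.Theory.
Local Open Scope ring_scope.

(* Compositions of n: all ordered tuples of positive integers summing to n.
   [compositions_aux fuel n] enumerates them by the first part k in 1..n;
   fuel = n suffices.  compositions 0 = [:: [::]] (the empty composition). *)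
Fixpoint compositions_aux (fuel n : nat) : seq (seq nat) :=
  if n == 0%N then [:: [::]] else
  match fuel with
  | 0%N => [::]
  | fuel'.+1 =>
      flatten [seq [seq k :: c | c <- compositions_aux fuel' (n - k)]
              | k <- iota 1 n]
  end.
Definition compositions (n : nat) : seq (seq nat) := compositions_aux n n.

Section BetaStar.
Variable R : realFieldType.

(* zeta^*(s) = (1 - a T + Q T^2)/((1-T)(1-QT)), T = Q^{-s}, evaluated at the
   positive integer j >= 2; zeta^*(1) := (Q+1-a)/(Q-1) (residue normalization). *)
Definition zeta_star (Q a : R) (j : nat) : R :=
  if j == 1%N then (Q + 1 - a) / (Q - 1)
  else let T := (Q ^+ j)^-1 in (1 - a * T + Q * T ^+ 2) / ((1 - T) * (1 - Q * T)).

Definition v_star (Q a : R) (k : nat) : R := \prod_(1 <= j < k.+1) zeta_star Q a j.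

Definition beta_star (Q a : R) (n : nat) : R :=
  \sum_(c <- compositions n)
    (\prod_(k <- c) v_star Q a k) /
    \prod_(i < (size c).-1) (1 - Q ^+ (nth 0%N c i + nth 0%N c i.+1)).

Definition ext0 (f : nat -> R) (k : int) : R :=
  match k with Posz n => f n | Negz _ => 0 end.

End BetaStar.

(* Main.v *)
Require Import Defs.
From mathcomp Require Import all_boot all_order all_algebra.
From mathcomp Require Import ring lra zify.
Import Order.TTheory GRing.Theory Num.Theory.
Local Open Scope ring_scope.

Lemma aux_step f n : compositions_aux f.+1 n.+1 =
  flatten [seq [seq k :: c | c <- compositions_aux f (n.+1 - k)] | k <- iota 1 n.+1].
Proof. by []. Qed.

Lemma comp_aux_fuel N : forall n f1 f2, (n <= N)%N -> (n <= f1)%N -> (n <= f2)%N ->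
  compositions_aux f1 n = compositions_aux f2 n.
Proof.
elim: N => [|N IH] n f1 f2 hN h1 h2.
  by move: hN; rewrite leqn0 => /eqP ->; case: f1 {h1}; case: f2 {h2}.
case: n hN h1 h2 => [|n] hN h1 h2; first by case: f1 {h1}; case: f2 {h2}.
case: f1 h1 => [//|f1] h1; case: f2 h2 => [//|f2] h2; rewrite !aux_step.
congr flatten; apply/eq_in_map => k; rewrite mem_iota => /andP [hk1 hk2].
congr map; apply: IH; lia.
Qed.

Lemma comps_rec n : compositions n.+1 =
  flatten [seq [seq k :: c | c <- compositions (n.+1 - k)] | k <- iota 1 n.+1].
Proof.
rewrite /compositions aux_step; congr flatten; apply/eq_in_map => k.
rewrite mem_iota => /andP [hk1 hk2]; congr map; apply: (@comp_aux_fuel (n.+1 - k)); lia.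
Qed.

Section Main.
Variables (R : realFieldType) (Q a : R).
Hypothesis hQ : 1 < Q.

Definition vv k := v_star Q a k.
Definition wt (c : seq nat) : R := (\prod_(k <- c) vv k) /
    \prod_(i < (size c).-1) (1 - Q ^+ (nth 0%N c i + nth 0%N c i.+1)).
Definition hf (k : nat) (c : seq nat) : R :=
  if c is h :: _ then (1 - Q ^+ (k + h))^-1 else 1.
Definition g (r k : nat) : R := \sum_(c <- compositions r) wt c * hf k c.

Lemma wt_cons h c : wt (h :: c) = vv h * wt c * hf h c.
Proof.
rewrite /wt big_cons /=; case: c => [|h' c] /=.
  by rewrite !big_ord0 big_nil !invr1 !mulr1.
rewrite big_ord_recl /= invfM; set P := \prod_(i < size c) _.
have -> : P = \prod_(i < size c) (1 - Q ^+ (nth 0%N (h' :: c) i + nth 0%N (h' :: c) i.+1)).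
  by apply: eq_bigr => i _.
ring.
Qed.

Lemma beta_wt n : beta_star Q a n = \sum_(c <- compositions n) wt c.
Proof. by []. Qed.

Lemma sum_comps_rec n (F : seq nat -> R) :
  \sum_(c <- compositions n.+1) F c =
  \sum_(1 <= k < n.+2) \sum_(c <- compositions (n.+1 - k)) F (k :: c).
Proof.
rewrite comps_rec big_flatten big_map.
have -> : index_iota 1 n.+2 = iota 1 n.+1 by rewrite /index_iota subn1.
by apply: eq_bigr => k _; rewrite big_map.
Qed.

Lemma g_rec r k : g r.+1 k =
  \sum_(1 <= h < r.+2) vv h * g (r.+1 - h) h * (1 - Q ^+ (k + h))^-1.
Proof.
rewrite /g sum_comps_rec; apply: eq_bigr => h _.
rewrite big_distrr big_distrl /=; apply: eq_bigr => c _.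
rewrite wt_cons /=; ring.
Qed.

Lemma beta_rec r : beta_star Q a r.+1 =
  \sum_(1 <= h < r.+2) vv h * g (r.+1 - h) h.
Proof.
rewrite beta_wt sum_comps_rec; apply: eq_bigr => h _.
rewrite /g big_distrr /=; apply: eq_bigr => c _.
by rewrite wt_cons mulrA.
Qed.

Lemma beta0 : beta_star Q a 0 = 1.
Proof. by rewrite beta_wt /compositions /= big_cons big_nil /wt big_nil big_ord0 divr1 addr0. Qed.

Lemma g0 k : g 0 k = 1.
Proof. by rewrite /g /compositions /= big_cons big_nil /wt big_nil big_ord0 divr1 addr0 mulr1. Qed.


Lemma Qgt0 : 0 < Q. Proof. by apply: lt_trans hQ. Qed.
Lemma Xgt0 n : 0 < Q ^+ n. Proof. exact: exprn_gt0 Qgt0. Qed.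
Lemma Xgt1 n : (0 < n)%N -> 1 < Q ^+ n.
Proof. by move=> hn; rewrite exprn_egt1 // -lt0n. Qed.
Lemma XgtQ n : (1 < n)%N -> Q < Q ^+ n.
Proof. by move=> hn; rewrite -{1}(expr1 Q) ltr_eXn2l. Qed.
Lemma Xneq0 n : Q ^+ n != 0. Proof. by rewrite gt_eqF ?Xgt0. Qed.
Lemma Xm1neq0 n : (0 < n)%N -> Q ^+ n - 1 != 0.
Proof. by move=> hn; rewrite subr_eq0 gt_eqF ?Xgt1. Qed.
Lemma oneXneq0 n : (0 < n)%N -> 1 - Q ^+ n != 0.
Proof. by move=> hn; rewrite subr_eq0 lt_eqF ?Xgt1. Qed.
Lemma XmQneq0 n : (1 < n)%N -> Q ^+ n - Q != 0.
Proof. by move=> hn; rewrite subr_eq0 gt_eqF ?XgtQ. Qed.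

Lemma vvS j : vv j.+1 = vv j * zeta_star Q a j.+1.
Proof. by rewrite /vv /v_star big_nat_recr. Qed.

Lemma vv1 : vv 1 = (Q + 1 - a) / (Q - 1).
Proof. by rewrite (vvS 0) /vv /v_star big_geq // mul1r /zeta_star eqxx. Qed.

Lemma zeta_ge2 j : (1 < j)%N -> zeta_star Q a j =
  (Q ^+ j * Q ^+ j - a * Q ^+ j + Q) / ((Q ^+ j - 1) * (Q ^+ j - Q)).
Proof.
move=> hj; rewrite /zeta_star ifF; last by apply/negbTE; rewrite neq_ltn hj orbT.
have h0 := Xneq0 j; have h1 := Xm1neq0 j (ltnW hj); have h2 := XmQneq0 j hj.
move: h0 h1 h2; set X := Q ^+ j => h0 h1 h2; field; by rewrite h0 h1 h2.
Qed.


Definition A (r j : nat) : R := if (0 < j)%N && (j <= r)%N then vv j * g (r - j) j else 0.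

Lemma A0 r : A r 0 = 0. Proof. by rewrite /A. Qed.
Lemma Abig r j : (r < j)%N -> A r j = 0.
Proof. by move=> h; rewrite /A (leqNgt j r) h andbF. Qed.
Lemma Aval r j : (0 < j)%N -> (j <= r)%N -> A r j = vv j * g (r - j) j.
Proof. by move=> h1 h2; rewrite /A h1 h2. Qed.

Lemma sum_ext (F : nat -> R) n M : (n <= M)%N -> (forall j, (n <= j)%N -> F j = 0) ->
  \sum_(0 <= j < M) F j = \sum_(0 <= j < n) F j.
Proof.
move=> hnM hF; rewrite (@big_cat_nat _ _ _ n 0 M) //= [X in _ + X]big1_seq ?addr0 //.
by move=> j /andP [_]; rewrite mem_index_iota => /andP [h _]; apply: hF.
Qed.

Lemma sum_A_gen (F : nat -> R) r M : (0 < r)%N -> (r < M)%N ->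
  \sum_(0 <= j < M) A r j * F j = \sum_(1 <= h < r.+1) vv h * g (r - h) h * F h.
Proof.
move=> hr hM; rewrite (@sum_ext _ r.+1 M) //; last first.
  by move=> j hj; rewrite Abig ?mul0r.
rewrite big_nat_recl // A0 mul0r add0r big_add1 /=.
apply: eq_big_nat => j /andP [h1 h2]; rewrite Aval //.
Qed.

Lemma g_sum r k M : (0 < r)%N -> (r < M)%N ->
  g r k = \sum_(0 <= j < M) A r j * (1 - Q ^+ (k + j))^-1.
Proof.
move=> hr hM; rewrite sum_A_gen //; case: r hr hM => [//|r] _ hM.
by rewrite g_rec.
Qed.

Lemma beta_sum r M : (0 < r)%N -> (r < M)%N ->
  beta_star Q a r = \sum_(0 <= j < M) A r j.
Proof.
move=> hr hM; rewrite (eq_bigr (fun j => A r j * 1)) ?sum_A_gen //; last by move=> j _; rewrite mulr1.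
case: r hr hM => [//|r] _ hM; rewrite beta_rec; apply: eq_bigr => j _; by rewrite mulr1.
Qed.

Lemma sum_shift (f h : nat -> R) M : f 0%N = 0 ->
  \sum_(0 <= j < M.+1) f j.-1 * h j = \sum_(0 <= j < M) f j * h j.+1.
Proof. by move=> f0; rewrite big_nat_recl //= f0 mul0r add0r. Qed.

Lemma sum_last (F : nat -> R) M : F M = 0 ->
  \sum_(0 <= j < M.+1) F j = \sum_(0 <= j < M) F j.
Proof. by move=> h; rewrite big_nat_recr //= h addr0. Qed.


Definition Sp r := forall m, (Q ^+ m.+1 - 1) * g r m =
  (Q ^+ (r + m.+1) - 1) * g r m.+1 - Q ^+ m * (Q ^+ r - Q) * g r.-1 m.+1.
Definition Wf (u : R) := (1 - a * u + Q * (u * u)) / (1 - Q * u).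
Definition Tp s := forall m, (Q ^+ s.+1 - 1) * Q ^+ m * g s.+1 m =
  Wf (Q ^+ m) * g s m.+1 + (Q ^+ (s + m) - 1) * g s m.
Definition PSp r j := (Q - Q ^+ j) * A r j + (Q ^+ j - Q ^+ r.+1) * A r j.-1
  + (Q ^+ r - Q) * A r.-1 j.-1 = 0.
Definition Vp n j := (Q ^+ j - Q) * (1 - Q ^+ n) * A n j
  + (Q ^+ j - Q) * (Q ^+ n.-1 - Q ^+ j) * A n.-1 j
  + (Q - a * Q ^+ j + Q ^+ j * Q ^+ j) * A n.-1 j.-1 = 0.

Lemma PS_T t i : (0 < i)%N -> Tp t -> PSp (t + i.+1) i.+1.
Proof.
move=> hi HT; have H := HT i; rewrite /PSp /=.
rewrite (Aval (t + i.+1) i.+1) // ?addnK; last by lia.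
rewrite (Aval (t + i.+1) i) //; last by lia.
rewrite (Aval (t + i.+1).-1 i) //; last by lia.
have -> : (t + i.+1 - i = t.+1)%N by lia.
have -> : ((t + i.+1).-1 - i = t)%N by lia.
rewrite vvS zeta_ge2 //.
have e1 : Q ^+ i.+1 = Q * Q ^+ i by rewrite exprS.
have e2 : Q ^+ (t + i.+1).+1 = Q * Q * Q ^+ t * Q ^+ i.
  by rewrite (_ : ((t + i.+1).+1 = 2 + t + i)%N) ?expr2 ?exprD; [ring | lia].
have e3 : Q ^+ (t + i.+1) = Q * Q ^+ t * Q ^+ i.
  by rewrite (_ : ((t + i.+1) = 1 + t + i)%N) ?expr1 ?exprD; [ring | lia].
have e4 : Q ^+ t.+1 = Q * Q ^+ t by rewrite exprS.
have e5 : Q ^+ (t + i) = Q ^+ t * Q ^+ i by rewrite exprD.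
move: H; rewrite /Wf e1 e2 e3 e4 e5.
have n1 := Xneq0 i; have n2 := Xm1neq0 i.+1 isT; have n3 := XmQneq0 i.+1 hi.
have n4 := oneXneq0 i.+1 isT; have n5 := Xm1neq0 t.+1 isT.
rewrite e1 e4 in n2 n3 n4 n5.
move: n1 n2 n3 n4 n5.
set X := Q ^+ i; set Z := Q ^+ t; set G1 := g t i.+1; set G2 := g t.+1 i; set G3 := g t i.
move=> n1 n2 n3 n4 n5 H.
have -> : G2 = (((1 - a * X + Q * (X * X)) / (1 - Q * X)) * G1 + (Z * X - 1) * G3) / ((Q * Z - 1) * X).
  rewrite -H; field; by rewrite n1 n5.
field; by rewrite ?n1 ?n2 ?n3 ?n4 ?n5.
Qed.


Lemma V_S t i : (0 < i)%N -> (0 < t)%N -> Sp t -> Vp (t + i.+1) i.+1.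
Proof.
move=> hi ht HS; have H := HS i; rewrite /Vp /=.
rewrite (Aval (t + i.+1) i.+1) // ?addnK; last by lia.
rewrite (Aval (t + i.+1).-1 i.+1) //; last by lia.
rewrite (Aval (t + i.+1).-1 i) //; last by lia.
have -> : ((t + i.+1).-1 - i.+1 = t.-1)%N by lia.
have -> : ((t + i.+1).-1 - i = t)%N by lia.
rewrite vvS zeta_ge2 //.
have e1 : Q ^+ i.+1 = Q * Q ^+ i by rewrite exprS.
have e3 : Q ^+ (t + i.+1) = Q * Q ^+ t * Q ^+ i.
  by rewrite (_ : ((t + i.+1) = 1 + t + i)%N) ?expr1 ?exprD; [ring | lia].
have e5 : Q ^+ (t + i.+1).-1 = Q ^+ t * Q ^+ i.
  by rewrite (_ : ((t + i.+1).-1 = t + i)%N) ?exprD; [ring | lia].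
move: H; rewrite e1 e3 e5.
have n1 := Xneq0 i; have n2 := Xm1neq0 i.+1 isT; have n3 := XmQneq0 i.+1 hi.
rewrite e1 in n2 n3.
move: n1 n2 n3.
set X := Q ^+ i; set Z := Q ^+ t; set G1 := g t i.+1; set G4 := g t.-1 i.+1; set G3 := g t i.
move=> n1 n2 n3 H.
have -> : G3 = ((Q * Z * X - 1) * G1 - X * (Z - Q) * G4) / (Q * X - 1).
  apply: (mulfI n2); rewrite H; field; by rewrite n2.
field; by rewrite ?n1 ?n2 ?n3.
Qed.

Lemma V_top i : (0 < i)%N -> Vp i.+1 i.+1.
Proof.
move=> hi; rewrite /Vp /= (Abig i i.+1) // mulr0 addr0.
rewrite (Aval i.+1 i.+1) // (Aval i i) // !subnn !g0 !mulr1 vvS zeta_ge2 //.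
have e1 : Q ^+ i.+1 = Q * Q ^+ i by rewrite exprS.
have n2 := Xm1neq0 i.+1 isT; have n3 := XmQneq0 i.+1 hi.
rewrite e1 in n2 n3 *; move: n2 n3; set X := Q ^+ i => n2 n3.
field; by rewrite n2 n3.
Qed.

Lemma Vp_all s : (forall t, (0 < t)%N -> (t < s)%N -> Sp t) -> forall j, Vp s.+1 j.
Proof.
move=> IH j; case: j => [|j].
  by rewrite /Vp /= !A0 !mulr0 !addr0.
case: j => [|i].
  by rewrite /Vp /= !A0 !subrr !mul0r !mulr0 !addr0.
case: (ltngtP i.+2 s.+1) => hc.
- have -> : s.+1 = ((s.+1 - i.+2) + i.+2)%N by lia.
  apply: V_S => //; first by lia.
  by apply: IH; lia.
- by rewrite /Vp /= !Abig ?mulr0 ?addr0 //; lia.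
- rewrite -hc; exact: V_top.
Qed.

Lemma PSp_all r : (0 < r)%N -> (forall t, (t <= r - 2)%N -> Tp t) -> forall j, PSp r j.
Proof.
move=> hr IH j; case: j => [|j].
  by rewrite /PSp /= !A0 !mulr0 !addr0.
case: j => [|i].
  by rewrite /PSp /= !A0 expr1 subrr !mul0r !mulr0 !addr0.
case: (ltnP r i.+2) => hc.
- case: (ltngtP r.+1 i.+2) => hc2.
  + rewrite /PSp /= !Abig ?mulr0 ?addr0 //; lia.
  + lia.
  + rewrite /PSp /= -hc2 subrr mul0r !Abig ?mulr0 ?addr0 //; lia.
- have -> : r = ((r - i.+2) + i.+2)%N by lia.
  apply: PS_T => //.
  by apply: IH; lia.
Qed.


Lemma keyS (u x Y Am Ap C : R) : 1 - u * x != 0 ->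
  (Q - x) * Am + (x - Q * Y) * Ap + (Y - Q) * C = 0 ->
  (Q * u - 1) * (Am * (1 - u * x)^-1) - ((Q * Y * u - 1) * (Ap * (1 - u * x)^-1)
    - u * (Y - Q) * (C * (1 - u * x)^-1)) = Ap - Am.
Proof.
move=> nz H.
have -> : (Q * u - 1) * (Am * (1 - u * x)^-1) - ((Q * Y * u - 1) * (Ap * (1 - u * x)^-1)
    - u * (Y - Q) * (C * (1 - u * x)^-1)) =
    Ap - Am + u * (1 - u * x)^-1 * ((Q - x) * Am + (x - Q * Y) * Ap + (Y - Q) * C).
  by field; rewrite nz.
by rewrite H mulr0 addr0.
Qed.

Lemma S_PS r : (1 < r)%N -> (forall j, PSp r j) -> Sp r.
Proof.
move=> hr HP m.
have h1 : (0 < r)%N by lia.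
rewrite (g_sum r m r.+1) // (g_sum r m.+1 r.+1) // (g_sum r.-1 m.+1 r.+1); try lia.
set e := fun k => (1 - Q ^+ k)^-1.
have E1 : \sum_(0 <= j < r.+1) A r j * e (m + j)%N = \sum_(0 <= j < r.+2) A r j * e (m + j)%N.
  by rewrite [RHS]sum_last // Abig ?mul0r.
have E2 : \sum_(0 <= j < r.+1) A r j * e (m.+1 + j)%N = \sum_(0 <= j < r.+2) A r j.-1 * e (m + j)%N.
  by rewrite sum_shift ?A0 //; apply: eq_bigr => j _; rewrite addnS addSn.
have E3 : \sum_(0 <= j < r.+1) A r.-1 j * e (m.+1 + j)%N = \sum_(0 <= j < r.+2) A r.-1 j.-1 * e (m + j)%N.
  by rewrite sum_shift ?A0 //; apply: eq_bigr => j _; rewrite addnS addSn.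
rewrite E1 E2 E3; apply/eqP; rewrite -subr_eq0; apply/eqP.
rewrite !mulr_sumr -!sumrB.
rewrite (telescope_sumr_eq (fun j => - A r j.-1)) //; last first.
  move=> j _ /=; case: j => [|j]; first by rewrite !A0; ring.
  have hx : 1 - Q ^+ m * Q ^+ j.+1 != 0 by rewrite -exprD oneXneq0 // addnS.
  have em : Q ^+ m.+1 = Q * Q ^+ m by rewrite exprS.
  have er : Q ^+ (r + m.+1) = Q * Q ^+ r * Q ^+ m.
    by rewrite (_ : (r + m.+1 = 1 + r + m)%N) ?exprD ?expr1; [ring | lia].
  rewrite /e exprD em er keyS //; first by rewrite /=; ring.
  by have := HP j.+1; rewrite /PSp [Q ^+ r.+1]exprS.
by rewrite /= Abig // A0 oppr0 subr0.
Qed.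


Lemma keyT (u z Ys Ap1 As As1 : R) : z != 0 -> 1 - z != 0 -> 1 - u * (Q * z) != 0 ->
  1 - Q * u != 0 ->
  (Q * z - Q) * (1 - Q * Ys) * Ap1 + (Q * z - Q) * (Ys - Q * z) * As
    + (Q - a * (Q * z) + (Q * z) * (Q * z)) * As1 = 0 ->
  (Q * Ys - 1) * u * (Ap1 * (1 - u * (Q * z))^-1)
    - ((1 - a * u + Q * (u * u)) / (1 - Q * u) * (As1 * (1 - u * (Q * z))^-1)
       + (Ys * u - 1) * (As * (1 - u * (Q * z))^-1))
  = As - As1 - (Q + 1 - a) * u * (1 - Q * u)^-1 * (As1 * (1 - z)^-1).
Proof.
move=> n1 n2 n3 n4 H.
have nQ : Q != 0 by rewrite gt_eqF ?Qgt0.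
have n5 : z - 1 != 0 by rewrite -oppr_eq0 opprB.
set L := (Q * Ys - 1) * u * _ - _.
have -> : L = As - As1 - (Q + 1 - a) * u * (1 - Q * u)^-1 * (As1 * (1 - z)^-1)
   - u * (1 - u * (Q * z))^-1 / (Q * z - Q) *
   ((Q * z - Q) * (1 - Q * Ys) * Ap1 + (Q * z - Q) * (Ys - Q * z) * As
    + (Q - a * (Q * z) + (Q * z) * (Q * z)) * As1).
  rewrite /L; field.
  have n6 : Q * z - Q != 0 by rewrite -{2}(mulr1 Q) -mulrBr mulf_neq0.
  by rewrite n6 n3 n2 n4.
by rewrite H mulr0 subr0.
Qed.


Lemma T_V s : (0 < s)%N -> (forall j, Vp s.+1 j) -> Sp s -> Tp s.
Proof.
move=> hs HV HS m.
have HS0 := HS 0%N.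
rewrite (g_sum s.+1 m s.+2) // (g_sum s m.+1 s.+1) // (g_sum s m s.+1) //.
set e := fun k => (1 - Q ^+ k)^-1.
have E2 : \sum_(0 <= j < s.+1) A s j * e (m.+1 + j)%N = \sum_(0 <= j < s.+2) A s j.-1 * e (m + j)%N.
  by rewrite sum_shift ?A0 //; apply: eq_bigr => j _; rewrite addnS addSn.
have E3 : \sum_(0 <= j < s.+1) A s j * e (m + j)%N = \sum_(0 <= j < s.+2) A s j * e (m + j)%N.
  by rewrite [RHS]sum_last // Abig ?mul0r.
rewrite E2 E3; apply/eqP; rewrite -subr_eq0; apply/eqP.
rewrite !mulr_sumr -big_split -sumrB /=.
rewrite big_nat_recl // big_nat_recl //= !A0 /e /Wf !(mul0r, mulr0, add0r, addr0, subr0, sub0r, oppr0).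
set u := Q ^+ m.
have n4 : 1 - Q * u != 0 by rewrite /u -exprS oneXneq0.
have eA : Q ^+ (s + m) = Q ^+ s * u by rewrite exprD.
have eB : Q ^+ s.+1 = Q * Q ^+ s by rewrite exprS.
have eC i : Q ^+ (m + i.+2) = u * (Q * Q ^+ i.+1) by rewrite exprD [Q ^+ i.+2]exprS.
rewrite eA eB.
under eq_bigr => i _.
  rewrite eC.
  rewrite keyT; first last.
  - by have := HV i.+2; rewrite /Vp /= !exprS.
  - exact: n4.
  - by rewrite -exprS -exprD oneXneq0 // addnS.
  - exact: oneXneq0.
  - exact: Xneq0.
  over.
rewrite sumrB (telescope_sumr (fun i => A s i.+1)) // (Abig s s.+1) // -mulr_sumr.
have Hg0 : g s 0 = \sum_(0 <= i < s) A s i.+1 * (1 - Q ^+ i.+1)^-1.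
  by rewrite (g_sum s 0 s.+1) // big_nat_recl // A0 mul0r add0r.
rewrite -Hg0 (Aval s.+1 1) // (Aval s 1) // !subn1 /= vv1 addn1 exprS -/u.
move: HS0; rewrite expr1 expr0 mul1r addn1 exprS.
have nQ1 : Q - 1 != 0 by rewrite subr_eq0 gt_eqF.
set G0 := g s 0; set G1 := g s 1; set Gm := g s.-1 1; set Qs := Q ^+ s => HS0.
have -> : G0 = ((Q * Qs - 1) * G1 - (Qs - Q) * Gm) / (Q - 1).
  by rewrite -HS0; field; rewrite nQ1.
field; by rewrite nQ1 n4.
Qed.


Lemma S1 : Sp 1.
Proof.
move=> m; rewrite /Sp /= subrr mulr0 mul0r subr0.
rewrite !(g_sum 1 _ 2) // !big_nat_recl // !big_geq // A0 !mul0r !add0r !addr0.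
rewrite (Aval 1 1) // subnn g0 mulr1.
have n1 := oneXneq0 m.+1 isT; have n2 := oneXneq0 m.+2 isT.
rewrite !addn1 (_ : (1 + m.+1)%N = m.+2) //.
field; by rewrite n1 n2.
Qed.

Lemma T0 : Tp 0.
Proof.
move=> m; rewrite /Tp !g0 !mulr1 add0n expr1.
rewrite (g_sum 1 _ 2) // !big_nat_recl // !big_geq // A0 !mul0r !add0r !addr0.
rewrite (Aval 1 1) // subnn g0 mulr1 vv1 addn1 exprS /Wf.
have n1 : 1 - Q * Q ^+ m != 0 by rewrite -exprS oneXneq0.
have nQ1 : Q - 1 != 0 by rewrite subr_eq0 gt_eqF.
move: n1; set u := Q ^+ m => n1.
field; by rewrite n1 nQ1.
Qed.

Lemma all_ST N : forall r, (r <= N)%N -> ((0 < r)%N -> Sp r) /\ Tp r.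
Proof.
elim: N => [|N IH] r hr.
  by move: hr; rewrite leqn0 => /eqP ->; split => //; exact: T0.
case: (leqP r N) => hrN; first exact: IH.
have hr1 : r = N.+1 by lia.
have hSr : Sp r.
  case: (ltngtP r 1) => hc; [lia | | by rewrite hc; exact: S1].
  apply: S_PS => //; apply: PSp_all; first by lia.
  by move=> t ht; apply: (IH t _).2; lia.
split; first by move=> _; exact: hSr.
case: r hr hrN hr1 hSr => [|s] hr hrN hr1 hSs; first by lia.
apply: T_V => //.
apply: Vp_all => t ht1 ht2; apply: (IH t _).1 => //; lia.
Qed.


Lemma shift_gen r M (h : nat -> R) : (r.+1 < M)%N ->
  \sum_(0 <= j < M) h j * A r j.-1 = \sum_(0 <= j < M) h j.+1 * A r j.
Proof.
case: M => [//|M] hM.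
rewrite (eq_bigr (fun j => A r j.-1 * h j)); last by move=> j _; rewrite mulrC.
rewrite sum_shift ?A0 // [RHS]sum_last; last by rewrite Abig ?mulr0 //; lia.
by apply: eq_bigr => j _; rewrite mulrC.
Qed.

Lemma shiftP r M (P F : nat -> R) : (r.+1 < M)%N ->
  \sum_(0 <= j < M) (P j + F j * A r j.-1) = \sum_(0 <= j < M) (P j + F j.+1 * A r j).
Proof. by move=> h; rewrite !big_split /= shift_gen. Qed.

Lemma PS_all' r : (0 < r)%N -> forall j, PSp r j.
Proof.
move=> hr; apply: PSp_all => // t _; exact: (@all_ST t t (leqnn t)).2.
Qed.

Lemma V_all' s : forall j, Vp s.+1 j.
Proof.
apply: Vp_all => t ht _; exact: (@all_ST t t (leqnn t)).1.
Qed.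

Lemma rec_main k : (Q ^+ k.+2 - 1) * beta_star Q a k.+2 =
  (Q ^+ k.+2 + Q ^+ k.+1 - a) * beta_star Q a k.+1 - (Q ^+ k.+1 - Q) * beta_star Q a k.
Proof.
pose h j := (Q ^+ j)^-1.
have Sa : \sum_(0 <= j < k.+4) ((h j * (Q - Q ^+ j) * A k.+2 j
          + h j.+1 * (Q ^+ j.+1 - Q ^+ k.+3) * A k.+2 j)
          + h j.+1 * (Q ^+ k.+2 - Q) * A k.+1 j) = 0.
  have H0 : \sum_(0 <= j < k.+4) h j * ((Q - Q ^+ j) * A k.+2 j + (Q ^+ j - Q ^+ k.+3) * A k.+2 j.-1
            + (Q ^+ k.+2 - Q) * A k.+1 j.-1) = 0.
    by apply: big1 => j _; have := PS_all' k.+2 isT j; rewrite /PSp /= => ->; rewrite mulr0.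
  rewrite (eq_bigr (fun j => (h j * (Q - Q ^+ j) * A k.+2 j + h j * (Q ^+ k.+2 - Q) * A k.+1 j.-1)
            + h j * (Q ^+ j - Q ^+ k.+3) * A k.+2 j.-1)) in H0; last by move=> j _; ring.
  rewrite shiftP in H0; last by lia.
  rewrite (eq_bigr (fun j => (h j * (Q - Q ^+ j) * A k.+2 j + h j.+1 * (Q ^+ j.+1 - Q ^+ k.+3) * A k.+2 j)
            + h j * (Q ^+ k.+2 - Q) * A k.+1 j.-1)) in H0; last by move=> j _; ring.
  by rewrite shiftP in H0; last by lia.
have Sb : \sum_(0 <= j < k.+4) ((h j * (Q ^+ j - Q) * (1 - Q ^+ k.+2) * A k.+2 j
          + h j * (Q ^+ j - Q) * (Q ^+ k.+1 - Q ^+ j) * A k.+1 j)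
          + h j.+1 * (Q - a * Q ^+ j.+1 + Q ^+ j.+1 * Q ^+ j.+1) * A k.+1 j) = 0.
  have H0 : \sum_(0 <= j < k.+4) h j * ((Q ^+ j - Q) * (1 - Q ^+ k.+2) * A k.+2 j
            + (Q ^+ j - Q) * (Q ^+ k.+1 - Q ^+ j) * A k.+1 j
            + (Q - a * Q ^+ j + Q ^+ j * Q ^+ j) * A k.+1 j.-1) = 0.
    by apply: big1 => j _; have := V_all' k.+1 j; rewrite /Vp /= => ->; rewrite mulr0.
  rewrite (eq_bigr (fun j => (h j * (Q ^+ j - Q) * (1 - Q ^+ k.+2) * A k.+2 j
          + h j * (Q ^+ j - Q) * (Q ^+ k.+1 - Q ^+ j) * A k.+1 j)
          + h j * (Q - a * Q ^+ j + Q ^+ j * Q ^+ j) * A k.+1 j.-1)) in H0; last by move=> j _; ring.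
  by rewrite shiftP in H0; last by lia.
have Sc : \sum_(0 <= j < k.+4) (((Q - Q ^+ j) * A k.+1 j + (Q ^+ j.+1 - Q ^+ k.+2) * A k.+1 j)
          + (Q ^+ k.+1 - Q) * A k j) = 0.
  have H0 : \sum_(0 <= j < k.+4) ((Q - Q ^+ j) * A k.+1 j + (Q ^+ j - Q ^+ k.+2) * A k.+1 j.-1
            + (Q ^+ k.+1 - Q) * A k j.-1) = 0.
    by apply: big1 => j _; have := PS_all' k.+1 isT j; rewrite /PSp /=.
  rewrite (eq_bigr (fun j => ((Q - Q ^+ j) * A k.+1 j + (Q ^+ k.+1 - Q) * A k j.-1)
            + (Q ^+ j - Q ^+ k.+2) * A k.+1 j.-1)) in H0; last by move=> j _; ring.
  rewrite shiftP in H0; last by lia.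
  rewrite (eq_bigr (fun j => ((Q - Q ^+ j) * A k.+1 j + (Q ^+ j.+1 - Q ^+ k.+2) * A k.+1 j)
            + (Q ^+ k.+1 - Q) * A k j.-1)) in H0; last by move=> j _; ring.
  by rewrite shiftP in H0; last by lia.
have B2 := beta_sum k.+2 k.+4 isT ltac:(lia).
have B1 := beta_sum k.+1 k.+4 isT ltac:(lia).
have B0 : (Q ^+ k.+1 - Q) * beta_star Q a k = (Q ^+ k.+1 - Q) * \sum_(0 <= j < k.+4) A k j.
  case: k {Sa Sb Sc B2 B1} => [|k]; first by rewrite expr1 subrr !mul0r.
  by rewrite (beta_sum k.+1 k.+4.+1) //; lia.
rewrite B2 B1 B0; apply/eqP; rewrite -subr_eq0; apply/eqP.
rewrite !mulr_sumr -!sumrB.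
set kap := Q * (Q ^+ k.+2 - 1) / (Q - Q ^+ k.+2).
rewrite (eq_bigr (fun j => (kap * (h j * (Q - Q ^+ j) * A k.+2 j
          + h j.+1 * (Q ^+ j.+1 - Q ^+ k.+3) * A k.+2 j
          + h j.+1 * (Q ^+ k.+2 - Q) * A k.+1 j)
   - (h j * (Q ^+ j - Q) * (1 - Q ^+ k.+2) * A k.+2 j
          + h j * (Q ^+ j - Q) * (Q ^+ k.+1 - Q ^+ j) * A k.+1 j
          + h j.+1 * (Q - a * Q ^+ j.+1 + Q ^+ j.+1 * Q ^+ j.+1) * A k.+1 j))
   + ((Q - Q ^+ j) * A k.+1 j + (Q ^+ j.+1 - Q ^+ k.+2) * A k.+1 j
          + (Q ^+ k.+1 - Q) * A k j))); last first.
  move=> j _; rewrite /kap /h.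
  have n1 := XmQneq0 k.+2 isT; have n2 := Xneq0 j.
  have nQ : Q != 0 by rewrite gt_eqF ?Qgt0.
  move: n1 n2; rewrite !exprS; set X := Q ^+ j; set Z := Q ^+ k => n1 n2.
  have n3 : Q - Q * (Q * Z) != 0 by rewrite -oppr_eq0 opprB.
  field; by rewrite ?n1 ?n2 ?n3 ?nQ.
by rewrite big_split /= sumrB -mulr_sumr Sa Sb Sc mulr0 subr0 addr0.
Qed.

End Main.

Theorem theorem4p4 (R : realFieldType) (Q a : R) (hQ : 1 < Q) :
  (forall n : nat, (1 <= n)%N ->
     (Q ^+ n - 1) * beta_star Q a n =
       (Q ^+ n + Q ^+ n.-1 - a) * ext0 (beta_star Q a) (n%:Z - 1)
       - (Q ^+ n.-1 - Q) * ext0 (beta_star Q a) (n%:Z - 2)) /\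
  (forall b : nat -> R, b 0%N = 1 ->
     (forall n : nat, (1 <= n)%N ->
        (Q ^+ n - 1) * b n =
          (Q ^+ n + Q ^+ n.-1 - a) * ext0 b (n%:Z - 1)
          - (Q ^+ n.-1 - Q) * ext0 b (n%:Z - 2)) ->
     forall n : nat, b n = beta_star Q a n).
Proof.
have E1 k : (k.+1)%:Z - 1 = k%:Z by lia.
have E2 k : (k.+2)%:Z - 2 = k%:Z by lia.
have E3 : (1%:Z - 2 = Negz 0) by [].
have nQ1 : Q - 1 != 0 by rewrite subr_eq0 gt_eqF.
have P1 : forall n : nat, (1 <= n)%N ->
     (Q ^+ n - 1) * beta_star Q a n =
       (Q ^+ n + Q ^+ n.-1 - a) * ext0 (beta_star Q a) (n%:Z - 1)
       - (Q ^+ n.-1 - Q) * ext0 (beta_star Q a) (n%:Z - 2).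
  case=> [//|[|k]] _.
    rewrite E1 E3 /= beta0 mulr0 subr0 expr1 expr0 mulr1.
    rewrite (beta_rec _ Q a 0) big_nat1 g0 mulr1 vv1.
    field; by rewrite nQ1.
  by rewrite E1 E2 /= rec_main.
split => // b b0 Hb.
have H : forall n, b n = beta_star Q a n /\ b n.+1 = beta_star Q a n.+1.
  elim=> [|n [IH1 IH2]].
    split; first by rewrite b0 beta0.
    have h1 := Hb 1%N isT; have h2 := P1 1%N isT.
    rewrite E1 E3 /= b0 in h1; rewrite E1 E3 /= beta0 in h2.
    apply: (mulfI (x := Q ^+ 1 - 1)); first by rewrite expr1.
    by rewrite h1 h2.
  split => //.
  have h1 := Hb n.+2 isT; have h2 := P1 n.+2 isT.
  rewrite E1 E2 /= IH1 IH2 in h1; rewrite E1 E2 /= in h2.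
  apply: (mulfI (x := Q ^+ n.+2 - 1)); first exact: Xm1neq0.
  by rewrite h1 h2.
by move=> n; case: (H n).
Qed.
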